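(* Let $\mathfrak{H}$ be a Hilbert space and let $C$ be a quasi-sectorial contraction on $\mathfrak{H}$ with numerical range $W(C)\subseteq D_\alpha$ for some $0\le\alpha<\pi/2$. Let $K>0$ be a constant such that $\|C^n(\mathbb{1}-C)\|\le \frac{K}{n+1}$ for all $n\in\mathbb{N}$. Then \[ \left\|C^n-e^{n(C-\mathbb{1})}\right\|\le \frac{M}{n^{1/3}}, \qquad n=1,2,3,\dots, \] where $M=2K+2$.
   Context: $\mathbb{1}$ is the identity operator. The numerical range of a bounded operator $C$ is $W(C)=\{\langle Cu,u\rangle: u\in\mathfrak{H},\ \|u\|=1\}$. For $\alpha\in[0,\pi/2)$, $D_\alpha:=\{z\in\mathbb{C}:|z|\le\sin\alpha\}\cup\{z\in\mathbb{C}: |\arg(1-z)|\le\alpha \text{ and } |z-1|\le\cos\alpha\}$. A contraction $C$ (bounded, $\|C\|\le1$) on $\mathfrak{H}$ is called quasi-sectorial with semi-angle $\alpha$ (vertex at $z=1$) if $W(C)\subseteq D_\alpha$. (For such $C$ a constant $K$ with $\|C^n(\mathbb{1}-C)\|\le K/(n+1)$ for all $n$ is known to exist.) *)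

(* Defs.v *)
From mathcomp Require Import all_boot all_order all_algebra.
From mathcomp Require Import all_classical all_reals all_analysis.
From mathcomp Require Export complex.
Import Order.TTheory GRing.Theory Num.Theory.
Import numFieldNormedType.Exports.

Set Implicit Arguments.
Unset Strict Implicit.
Unset Printing Implicit Defensive.

Local Open Scope ring_scope.
Local Open Scope classical_set_scope.
Local Open Scope complex_scope.

Record inner_product (R : realType) (H : completeNormedModType R[i]) := InnerProduct {
  ip :> H -> H -> R[i];
  ipDl : forall (a : R[i]) (u v w : H), ip (a *: u + v) w = a * ip u w + ip v w;
  ip_conj : forall u v : H, ip v u = (ip u v)^*;
  ip_norm : forall u : H, ip u u = `|u| ^+ 2 }.

Definition numerical_range (R : realType) (H : completeNormedModType R[i])
  (ip : inner_product H) (C : H -> H) : set R[i] :=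
  [set ip (C u) u | u in [set u : H | `|u| = 1]].

(* |arg w| <= a  (for 0 <= a < pi/2): w = |w| e^{i t} with |t| <= a.
   For w = 0 this holds trivially (the vertex belongs to the sector). *)
Definition absarg_le (R : realType) (w : R[i]) (a : R) : Prop :=
  exists t : R, `|t| <= a /\ w = `|w| * (cos t +i* sin t).

Definition D_alpha (R : realType) (a : R) : set R[i] :=
  [set z | `|z| <= (sin a)%:C \/ (absarg_le (1 - z) a /\ `|z - 1| <= (cos a)%:C)].

Definition contraction_op (R : realType) (H : completeNormedModType R[i]) (C : H -> H) :=
  forall u : H, `|C u| <= `|u|.

Definition quasi_sectorial (R : realType) (H : completeNormedModType R[i])
  (ip : inner_product H) (a : R) (C : H -> H) :=
  numerical_range ip C `<=` D_alpha a.

Definition opexp (R : realType) (H : completeNormedModType R[i]) (A : H -> H) (u : H) : H :=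
  limn (series (fun k : nat => (k`!%:R : R[i])^-1 *: iter k A u)).

(* Main.v *)
Require Import Defs.
From mathcomp Require Import all_boot all_order all_algebra.
From mathcomp Require Import all_classical all_reals all_analysis.
From mathcomp Require Import complex.
From mathcomp Require Import ring lra.
Import Order.TTheory GRing.Theory Num.Theory.
Import numFieldNormedType.Exports.
Local Open Scope ring_scope.
Local Open Scope complex_scope.
Section Gen.
Variables (R : realType) (V : lmodType R[i]) (f : {linear V -> V}) (nr : R) (u : V).

Definition bc (k j : nat) : R := 'C(k, j)%:R * nr ^+ j * (- nr) ^+ (k - j).

Lemma bcS k j : bc k.+1 j.+1 = nr * bc k j + (- nr) * bc k j.+1.
Proof.
rewrite /bc binS natrD subSS.
case: (ltnP j k) => [lt|ge].
  rewrite -(subnSK lt) !exprS; ring.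
rewrite (bin_small (n:=k) (m:=j.+1)) ?ltnS //.
rewrite exprS; ring.
Qed.

Lemma bc0 k : bc k.+1 0 = (- nr) * bc k 0.
Proof. rewrite /bc !bin0 !subn0 exprS; ring. Qed.

Lemma bc_out k : bc k k.+1 = 0.
Proof. by rewrite /bc bin_small // mul0r !mul0r. Qed.

Let A v := (nr%:C) *: (f v - v).

Lemma iterA_binom k : iter k A u =
  \sum_(j < k.+1) (bc k j)%:C *: iter j f u.
Proof.
elim: k => [|k IH].
  by rewrite big_ord1 /bc /= bin0 expr0 !mulr1 scale1r.
rewrite iterS IH /A.
set g := fun j => iter j f u.
have E1 : f (\sum_(j < k.+1) (bc k j)%:C *: g j) =
    \sum_(j < k.+1) (bc k j)%:C *: g j.+1.
  by rewrite linear_sum; apply: eq_bigr => j _; rewrite linearZ.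
rewrite E1 scalerBr !scaler_sumr.
rewrite [in RHS]big_ord_recl bc0.
rewrite [X in _ = _ + X](eq_bigr (fun j : 'I_k.+1 =>
   (nr * bc k j)%:C *: g j.+1 + ((- nr) * bc k j.+1)%:C *: g j.+1)); last first.
  by move=> j _; rewrite /bump /= bcS rmorphD scalerDl.
rewrite big_split /=.
have E2 : \sum_(i < k.+1) nr%:C *: ((bc k i)%:C *: g i.+1) =
    \sum_(i < k.+1) (nr * bc k i)%:C *: g i.+1.
  by apply: eq_bigr => j _; rewrite scalerA -rmorphM.
rewrite E2.
have E3 : \sum_(i < k.+1) nr%:C *: ((bc k i)%:C *: g i) =
   (nr * bc k 0)%:C *: g 0 + \sum_(i < k) (nr * bc k i.+1)%:C *: g i.+1.
  by rewrite big_ord_recl; congr (_ + _); [|apply: eq_bigr => j _]; rewrite scalerA -rmorphM.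
have E5 : \sum_(i < k.+1) (- nr * bc k i.+1)%:C *: iter i.+1 f u =
   \sum_(i < k) (- nr * bc k i.+1)%:C *: iter i.+1 f u.
  by rewrite big_ord_recr /= bc_out mulr0 scale0r addr0.
rewrite E3 E5.
rewrite opprD -!sumrN.
have E4 : forall x : R, - (x%:C *: g 0) = (- x)%:C *: g 0.
  by move=> x; rewrite rmorphN scaleNr.
rewrite E4 mulNr.
rewrite addrCA; congr (_ + _); congr (_ + _).
by apply: eq_bigr => j _; rewrite mulNr rmorphN scaleNr.
Qed.

Definition ae j : R := nr ^+ j / j`!%:R.
Definition tt m : R := (- nr) ^+ m / m`!%:R.
Definition cc m : R := \sum_(i < m) tt i.

Lemma ccS m : cc m.+1 = cc m + tt m.
Proof. by rewrite /cc big_ord_recr. Qed.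

Lemma fact_neq0 m : (m`!%:R : R) != 0.
Proof. by rewrite pnatr_eq0 -lt0n fact_gt0. Qed.

Lemma coef_step N j : (j <= N)%N -> (N`!%:R)^-1 * bc N j = ae j * tt (N - j).
Proof.
move=> jN; rewrite /bc /ae /tt -(bin_fact jN) !natrM.
have h1 := fact_neq0 j; have h2 := fact_neq0 (N - j).
have h3 : ('C(N, j)%:R : R) != 0 by rewrite pnatr_eq0 -lt0n bin_gt0.
field; by rewrite ?h1 ?h2 ?h3.
Qed.

Lemma S_coef N : series (fun k => (k`!%:R : R[i])^-1 *: iter k A u) N =
  \sum_(j < N) (ae j * cc (N - j))%:C *: iter j f u.
Proof.
elim: N => [|N IH].
  by rewrite /series /= big_geq // big_ord0.
rewrite seriesSr IH iterA_binom scaler_sumr.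
have E1 : \sum_(i < N.+1) (N`!%:R : R[i])^-1 *: ((bc N i)%:C *: iter i f u) =
    \sum_(i < N.+1) (ae i * tt (N - i))%:C *: iter i f u.
  apply: eq_bigr => j _; rewrite scalerA.
  have -> : (N`!%:R : R[i])^-1 = ((N`!%:R : R)^-1)%:C by rewrite fmorphV rmorph_nat.
  by rewrite -rmorphM coef_step // -ltnS.
rewrite E1 [in LHS]big_ord_recr [in RHS]big_ord_recr /= subnn subSnn addrA.
congr (_ + _); last by rewrite /cc big_ord1.
rewrite -big_split /=; apply: eq_bigr => j _.
by rewrite -scalerDl -rmorphD -mulrDr subSn ?ccS // ltnW.
Qed.

Lemma cc_sum N : (0 < N)%N -> \sum_(j < N) ae j * cc (N - j) = 1.
Proof.
case: N => // N _.
elim: N => [|N IH]; first by rewrite big_ord1 /ae /cc big_ord1 /tt /= !expr0 !divr1 mul1r.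
rewrite big_ord_recr /=.
have -> : \sum_(i < N.+1) ae i * cc (N.+2 - i) =
   \sum_(i < N.+1) ae i * cc (N.+1 - i) + \sum_(i < N.+1) ae i * tt (N.+1 - i).
  rewrite -big_split /=; apply: eq_bigr => j _.
  by rewrite -mulrDr -ccS subSn // ltnW.
rewrite IH subSnn /cc big_ord1 -addrA -[RHS]addr0; congr (_ + _).
transitivity (\sum_(i < N.+2) ae i * tt (N.+1 - i)).
  by rewrite [in RHS]big_ord_recr /= subnn.
transitivity ((N.+1`!%:R)^-1 * (nr + - nr) ^+ N.+1); last first.
  by rewrite subrr expr0n /= mulr0.
rewrite addrC exprDn mulr_sumr; apply: eq_bigr => j _.
rewrite -coef_step; last by rewrite -ltnS.
rewrite /bc mulr_natl; congr (_ * _).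
by rewrite mulrnAl mulrC.
Qed.
End Gen.

Local Open Scope classical_set_scope.
Lemma cvg_ex (K : numFieldType) (V : normedModType K) (s : nat -> V) l :
  s @ \oo --> l -> forall e : K, 0 < e -> exists M, forall m, (M <= m)%N -> `|l - s m| < e.
Proof.
move=> /cvgrPdist_lt H e e0; have := H e e0.
by case=> M _ HM; exists M => m Mm; apply: HM.
Qed.
Arguments cvg_ex {K V s l}.

Section Real.
Variables (R : realType) (nr : R).
Hypothesis nr0 : 0 <= nr.


Let a := ae R nr.
Definition TT m := \sum_(j < m) a j.
Definition rho m := expR nr - TT m.

Lemma a_ge0 j : 0 <= a j.
Proof. by rewrite /a /ae divr_ge0 // exprn_ge0. Qed.

Lemma TT_split m k : TT (m + k) = TT m + \sum_(i < k) a (m + i).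
Proof. by rewrite /TT big_split_ord. Qed.

Lemma TT_mono m k : TT m <= TT (m + k).
Proof. by rewrite TT_split lerDl sumr_ge0 // => i _; apply: a_ge0. Qed.

Lemma TT_cvg : TT @ \oo --> expR nr.
Proof.
have -> : TT = series (exp_coeff nr).
  apply/funext => m; rewrite /series /= big_mkord; apply: eq_bigr => i _.
  by rewrite /a /ae.
exact: is_cvg_series_exp_coeff.
Qed.

Lemma TT_le m : TT m <= expR nr.
Proof.
apply/ler_addgt0Pr => e e0.
have [M HM] := cvg_ex TT_cvg _ e0.
have := HM (M + m)%N (leq_addr _ _).
rewrite addnC => /ltW; rewrite ler_distlC => /andP[_ h].
exact: le_trans (TT_mono m M) h.
Qed.

Lemma rho_ge0 m : 0 <= rho m.
Proof. by rewrite /rho subr_ge0 TT_le. Qed.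

Lemma rho_le m : rho m <= expR nr.
Proof. by rewrite /rho lerBlDr lerDl sumr_ge0 // => i _; apply: a_ge0. Qed.

Lemma rho_anti m k : rho (m + k) <= rho m.
Proof. by rewrite /rho lerB // TT_mono. Qed.

Lemma rho_anti' m m' : (m <= m')%N -> rho m' <= rho m.
Proof. by move=> h; rewrite -(subnKC h) rho_anti. Qed.

Lemma tail_le m k : \sum_(i < k) a (m + i) <= rho m.
Proof.
by rewrite /rho -(lerD2l (TT m)) -TT_split addrC subrK TT_le.
Qed.

Lemma rho_cvg : forall e, 0 < e -> exists M, forall m, (M <= m)%N -> rho m < e.
Proof.
move=> e e0; have [M HM] := cvg_ex TT_cvg _ e0.
exists M => m /HM; rewrite /rho; apply: le_lt_trans; exact: ler_norm.
Qed.

Lemma a_cvg : forall e, 0 < e -> exists M, forall m, (M <= m)%N -> a m < e.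
Proof.
move=> e e0.
have := cvg_series_cvg_0 (is_cvg_series_exp_coeff nr).
move=> /cvg_ex /(_ e e0) [M HM]; exists M => m /HM.
by rewrite sub0r normrN ger0_norm //; apply: a_ge0.
Qed.

Lemma cc_cvg : cc R nr @ \oo --> expR (- nr).
Proof.
have -> : cc R nr = series (exp_coeff (- nr)).
  apply/funext => m; rewrite /series /= big_mkord; apply: eq_bigr => i _.
  by rewrite /tt.
exact: is_cvg_series_exp_coeff.
Qed.

Lemma cc_diff m k : `|cc R nr (m + k) - cc R nr m| <= rho m.
Proof.
have -> : cc R nr (m + k) = cc R nr m + \sum_(i < k) tt R nr (m + i).
  by rewrite /cc big_split_ord.
rewrite addrC addKr.
apply: le_trans (ler_norm_sum _ _ _) _.
apply: le_trans (tail_le m k); apply: ler_sum => i _.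
rewrite /tt /a /ae normrM normrX normrN ger0_norm // ger0_norm //.
Qed.

Lemma cc_bound m : `|cc R nr m - expR (- nr)| <= rho m.
Proof.
apply/ler_addgt0Pr => e e0.
have [M HM] := cvg_ex cc_cvg _ e0.
have h1 := HM (M + m)%N (leq_addr _ _).
have h2 := cc_diff m M.
rewrite addnC in h1.
have -> : cc R nr m - expR (- nr) =
   (cc R nr m - cc R nr (m + M)) + (cc R nr (m + M) - expR (- nr)).
  by rewrite addrA subrK.
apply: le_trans (ler_normD _ _) _.
rewrite lerD //; first by rewrite distrC.
by apply/ltW; rewrite distrC.
Qed.

Lemma conv_bound p m :
  \sum_(j < p + m) a j * rho (p + m - j) <= expR nr * (rho m + rho p).
Proof.
rewrite big_split_ord /= mulrDr lerD //.
  apply: le_trans (_ : \sum_(i < p) a i * rho m <= _).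
    apply: ler_sum => i _; rewrite ler_wpM2l ?a_ge0 // rho_anti' //.
    by rewrite -addnBAC ?leq_addl // ltnW.
  rewrite -mulr_suml ler_wpM2r ?rho_ge0 //; exact: TT_le.
apply: le_trans (_ : \sum_(i < m) a (p + i) * expR nr <= _).
  by apply: ler_sum => i _; rewrite ler_wpM2l ?a_ge0 // rho_le.
by rewrite -mulr_suml mulrC ler_wpM2l ?expR_ge0 // tail_le.
Qed.

Lemma aS k : a k.+1 = a k * nr / k.+1%:R.
Proof.
rewrite /a /ae factS natrM exprS.
have h1 := fact_neq0 R k.
have h2 : (k.+1%:R : R) != 0 by rewrite pnatr_eq0.
by field; rewrite h1 andbT addrC natr1 pnatr_eq0.
Qed.


Lemma moment N : \sum_(j < N.+2) a j * (j%:R - nr) ^+ 2 =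
  nr * TT N.+1 + nr ^+ 2 * (a N.+1 - a N).
Proof.
elim: N => [|N IH].
  rewrite !big_ord_recr big_ord0 /TT big_ord1 /= (aS 0) /a /ae /=.
  by rewrite fact0 expr0 divr1; field.
rewrite big_ord_recr IH /=.
have -> : TT N.+2 = TT N.+1 + a N.+1 by rewrite /TT big_ord_recr.
rewrite (aS N.+1) (aS N).
have e1 : (N.+2%:R : R) = N%:R + 2 by rewrite -addn2 natrD.
have e2 : (N.+1%:R : R) = N%:R + 1 by rewrite -addn1 natrD.
rewrite e1 e2.
have h1 : (N%:R + 1 : R) != 0 by rewrite -e2 pnatr_eq0.
have h2 : (N%:R + 2 : R) != 0 by rewrite -e1 pnatr_eq0.
by field; rewrite h1 h2.
Qed.
End Real.
Lemma div_le (R : realFieldType) (a b c d : R) : 0 < b -> 0 < c -> a * c <= d * b -> a / b <= d / c.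
Proof. by move=> b0 c0 h; rewrite ler_pdivrMr // mulrAC ler_pdivlMr. Qed.

Lemma pt_bound (R : realType) (K x jr nr d : R) : 1 <= x -> x ^+ 3 = nr -> 0 < K -> 0 <= jr ->
  d <= 2 ->
  (nr <= jr -> d <= K * (jr - nr) / (nr + 1)) ->
  (jr < nr -> d <= K * (nr - jr) / (jr + 1)) ->
  d <= 2 * K / x + 2 * (jr - nr) ^+ 2 / x ^+ 4.
Proof.
move=> x1 xn K0 j0 d2 H1 H2.
have x0 : 0 < x by apply: lt_le_trans x1.
have x40 : 0 < x ^+ 4 by rewrite exprn_gt0.
have t1 : 0 <= 2 * K / x by apply: divr_ge0; [rewrite mulr_ge0 // ltW | apply: ltW].
have t2 : 0 <= 2 * (jr - nr) ^+ 2 / x ^+ 4 by apply: divr_ge0; [rewrite mulr_ge0 ?sqr_ge0 | apply: ltW].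
case: (leP (x ^+ 4) ((jr - nr) ^+ 2)) => hs.
  have hB : 2 <= 2 * (jr - nr) ^+ 2 / x ^+ 4 by rewrite ler_pdivlMr //; lra.
  lra.
apply: le_trans (_ : 2 * K / x <= _); last by rewrite lerDl.
have x2 : 0 <= x ^+ 2 by rewrite exprn_ge0 // ltW.
have hx3 : x ^+ 3 = x * x ^+ 2 by rewrite exprS.
have nr0 : 0 <= nr by rewrite -xn exprn_ge0 // ltW.
have hx4 : x ^+ 4 = x ^+ 2 * x ^+ 2 by rewrite -exprD.
have hsq : forall t, 0 <= t -> t ^+ 2 < x ^+ 4 -> t < x ^+ 2.
  move=> t t0 ht; rewrite -(ltr_pXn2r (n:=2)) // ?nnegrE //.
  by rewrite -exprM.
case: (leP nr jr) => hj.
  apply: le_trans (H1 hj) _.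
  apply: div_le => //; first by lra.
  have h : jr - nr < x ^+ 2 by apply: hsq; rewrite ?subr_ge0.
  rewrite -mulrA; apply: le_trans (_ : K * (x ^+ 2 * x) <= _).
    rewrite ler_wpM2l ?(ltW K0) // ler_wpM2r ?(ltW x0) //; exact: ltW.
  rewrite -exprSr xn; nra.
apply: le_trans (H2 hj) _.
apply: div_le => //; first by lra.
have h : nr - jr < x ^+ 2.
  apply: hsq; first by rewrite subr_ge0 ltW.
  by rewrite -sqrrN opprB.
have : (nr - jr) * (x + 2) <= x ^+ 2 * (x + 2) by rewrite ler_wpM2r ?ltW //; lra.
have : x ^+ 2 * (x + 2) <= 2 * x ^+ 3 + 2.
  rewrite hx3 expr2; case: (leP x 2) => hx.
    have : 0 <= x * ((x - 1) * (x - 1)) by apply: mulr_ge0; [apply: ltW | apply: mulr_ge0; lra].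
    nra.
  have : 0 <= x * x * (x - 2) by apply: mulr_ge0; [apply: mulr_ge0; apply: ltW | lra].
  nra.
rewrite -xn => ha hb.
have : (nr - jr) * x <= 2 * (jr + 1) by rewrite -xn in h hj *; nra.
move=> hc; rewrite -mulrA (mulrC 2); nra.
Qed.

Section Norm.
Variables (R : realType) (H : normedModType R[i]).

Definition nrm (w : H) : R := complex.Re `|w|.

Lemma nrmE w : `|w| = (nrm w)%:C.
Proof. by rewrite /nrm RRe_real // normr_real. Qed.

Lemma nrm_ge0 w : 0 <= nrm w.
Proof. by rewrite -ler0c -nrmE. Qed.

Lemma nrmD v w : nrm (v + w) <= nrm v + nrm w.
Proof. by have := ler_normD v w; rewrite !nrmE -rmorphD lecR. Qed.

Lemma nrmN w : nrm (- w) = nrm w.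
Proof. by rewrite /nrm normrN. Qed.

Lemma nrmB v w : nrm (v - w) = nrm (w - v).
Proof. by rewrite /nrm distrC. Qed.

Lemma nrm_sum (I : Type) (r : seq I) (F : I -> H) :
  nrm (\sum_(i <- r) F i) <= \sum_(i <- r) nrm (F i).
Proof.
elim: r => [|x r IH]; first by rewrite !big_nil /nrm normr0.
rewrite !big_cons; apply: le_trans (nrmD _ _) _; exact: lerD.
Qed.

Lemma normC_real (x : R) : `|x%:C| = (`|x|)%:C.
Proof. by rewrite normc_def /= expr0n /= addr0 sqrtr_sqr. Qed.

Lemma nrmZ (x : R) w : nrm (x%:C *: w) = `|x| * nrm w.
Proof. by apply: complexI; rewrite -nrmE normrZ normC_real nrmE rmorphM. Qed.

Lemma nrm_lt (w : H) (e : R) : (`|w| < e%:C) = (nrm w < e).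
Proof. by rewrite nrmE ltcR. Qed.

Lemma posC (e : R[i]) : 0 < e -> exists2 r : R, 0 < r & e = r%:C.
Proof.
case: e => a b; rewrite ltcE /= => /andP[/eqP b0 a0].
by exists a => //; rewrite b0.
Qed.
End Norm.
Arguments nrm {R H}.
Arguments nrmE {R H}.
Arguments nrm_ge0 {R H}.
Arguments nrmD {R H}.
Arguments nrmB {R H}.
Arguments nrmN {R H}.
Arguments nrm_sum {R H I}.
Arguments nrmZ {R H}.
Arguments nrm_lt {R H}.

Lemma pt_boundU (R : realType) (K x jr nr d U : R) : 1 <= x -> x ^+ 3 = nr -> 0 < K -> 0 <= jr ->
  0 <= U -> d <= 2 * U ->
  (nr <= jr -> d <= K * (jr - nr) / (nr + 1) * U) ->
  (jr < nr -> d <= K * (nr - jr) / (jr + 1) * U) ->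
  d <= (2 * K / x + 2 * (jr - nr) ^+ 2 / x ^+ 4) * U.
Proof.
move=> x1 xn K0 j0 U0 d2 H1 H2.
have [Ue|Up] := eqVneq U 0.
  rewrite Ue in d2 *; rewrite mulr0 in d2; rewrite mulr0; exact: d2.
have U1 : 0 < U by rewrite lt_def Up U0.
rewrite -ler_pdivrMr //.
apply: pt_bound => //.
- by rewrite ler_pdivrMr.
- by move=> h; rewrite ler_pdivrMr // H1.
- by move=> h; rewrite ler_pdivrMr // H2.
Qed.

Section Main.
Variables (R : realType) (H : completeNormedModType R[i]) (C : {linear H -> H}).
Hypothesis Cc : contraction_op C.
Variable K : R.
Hypothesis K0 : 0 < K.
Hypothesis hK : forall (n : nat) (u : H), `|iter n C (u - C u)| <= (K / n.+1%:R)%:C * `|u|.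

Lemma iterB k v w : iter k C (v - w) = iter k C v - iter k C w.
Proof. by elim: k => [|k IH] //=; rewrite IH raddfB. Qed.

Lemma iter_contr k v : nrm (iter k C v) <= nrm v.
Proof.
elim: k => [|k IH] //=; apply: le_trans IH.
by have := Cc (iter k C v); rewrite !nrmE lecR.
Qed.

Lemma step_bound i v : nrm (iter i C v - iter i.+1 C v) <= K / i.+1%:R * nrm v.
Proof.
have := hK i v; rewrite iterB -iterSr !nrmE -rmorphM lecR //.
Qed.

Lemma tele p k v : nrm (iter p C v - iter (p + k) C v) <= k%:R * (K / p.+1%:R) * nrm v.
Proof.
elim: k => [|k IH].
  by rewrite addn0 subrr /nrm normr0 !mul0r.
have -> : iter p C v - iter (p + k.+1) C v =
   (iter p C v - iter (p + k) C v) + (iter (p + k) C v - iter (p + k).+1 C v).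
  by rewrite addnS addrA subrK.
apply: le_trans (nrmD _ _) _.
rewrite -[k.+1]addn1 natrD !mulrDl mul1r lerD //.
apply: le_trans (step_bound _ _) _.
rewrite ler_wpM2r ?nrm_ge0 // ler_pdivrMr // mulrAC ler_pdivlMr // (ler_wpM2l (ltW K0)) //.
by rewrite ler_nat ltnS leq_addr.
Qed.

Lemma d_bound n j v (x : R) : 1 <= x -> x ^+ 3 = n%:R ->
  nrm (iter n C v - iter j C v) <=
  (2 * K / x + 2 * (j%:R - n%:R) ^+ 2 / x ^+ 4) * nrm v.
Proof.
move=> x1 xn.
apply: (pt_boundU _ _ _ _ _ _ _ x1 xn K0 (ler0n _ j) (nrm_ge0 v)).
- apply: le_trans (nrmD _ _) _; rewrite nrmN.
  have := iter_contr n v; have := iter_contr j v; lra.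
- rewrite ler_nat => nj.
  have := tele n (j - n) v; rewrite subnKC //.
  have -> : K * (j%:R - n%:R) / (n%:R + 1) = (j - n)%:R * (K / n.+1%:R).
    by rewrite natrB // -natr1 mulrA (mulrC _ K).
  by [].
- rewrite ltr_nat => jn.
  have := tele j (n - j) v; rewrite subnKC; last exact: ltnW.
  rewrite nrmB.
  have -> : K * (n%:R - j%:R) / (j%:R + 1) = (n - j)%:R * (K / j.+1%:R).
    rewrite natrB; last exact: ltnW.
    by rewrite -natr1 mulrA (mulrC _ K).
  by [].
Qed.

Definition Sn (n : nat) (u : H) :=
  series (fun k => (k`!%:R : R[i])^-1 *: iter k (fun v => (n%:R : R)%:C *: (C v - v)) u).

Lemma S_repr n u N : (0 < N)%N ->
  iter n C u - Sn n u N =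
  \sum_(j < N) (ae R n%:R j * cc R n%:R (N - j))%:C *: (iter n C u - iter j C u).
Proof.
move=> N0; rewrite /Sn S_coef.
symmetry.
rewrite (eq_bigr (fun j : 'I_N => (ae R n%:R j * cc R n%:R (N - j))%:C *: iter n C u -
   (ae R n%:R j * cc R n%:R (N - j))%:C *: iter j C u)); last by move=> j _; rewrite scalerBr.
by rewrite sumrB -scaler_suml -rmorph_sum cc_sum // scale1r.
Qed.

Lemma S_bound1 n u N : (0 < N)%N ->
  nrm (iter n C u - Sn n u N) <=
  \sum_(j < N) ae R n%:R j * (expR (- n%:R) + rho R n%:R (N - j)) *
     nrm (iter n C u - iter j C u).
Proof.
move=> N0; rewrite S_repr //.
have nr0 : (0 : R) <= n%:R by [].
apply: le_trans (nrm_sum _ _) _; apply: ler_sum => j _.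
rewrite nrmZ ler_wpM2r ?nrm_ge0 // normrM (ger0_norm (a_ge0 R n%:R nr0 j)).
rewrite ler_wpM2l ?a_ge0 //.
have h := cc_bound R n%:R nr0 (N - j).
have h2 := ler_normD (cc R n%:R (N - j) - expR (- n%:R)) (expR (- n%:R)).
rewrite subrK (ger0_norm (expR_ge0 _)) in h2.
by apply: le_trans h2 _; rewrite addrC lerD2l.
Qed.

Lemma d_le2 n j v : nrm (iter n C v - iter j C v) <= 2 * nrm v.
Proof.
apply: le_trans (nrmD _ _) _; rewrite nrmN.
have := iter_contr n v; have := iter_contr j v; lra.
Qed.

Lemma main_est n u (x : R) p m : 1 <= x -> x ^+ 3 = n%:R ->
  nrm (iter n C u - Sn n u (p.+2 + m)) <=
  (2 * K / x + 2 * n%:R / x ^+ 4) * nrm u +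
  (expR (- n%:R) * (2 / x ^+ 4) * n%:R ^+ 2 * ae R n%:R (p + m).+1 +
   2 * expR n%:R * (rho R n%:R m + rho R n%:R p.+2)) * nrm u.
Proof.
move=> x1 xn.
have nr0 : (0 : R) <= n%:R by [].
have x0 : 0 < x by apply: lt_le_trans x1.
have N0 : (0 < p.+2 + m)%N by rewrite addSn.
apply: le_trans (S_bound1 n u _ N0) _.
set nr : R := n%:R; set U := nrm u; set e := expR (- nr); set E := expR nr.
set k1 := 2 * K / x; set k2 := 2 / x ^+ 4.
have U0 : 0 <= U := nrm_ge0 u.
have e0 : 0 <= e := expR_ge0 _.
have k10 : 0 <= k1 by apply: divr_ge0; [apply: mulr_ge0; [|apply: ltW]|apply: ltW].
have k20 : 0 <= k2 by apply: divr_ge0; [|apply: exprn_ge0; apply: ltW].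
apply: le_trans (_ : \sum_(j < p.+2 + m) (e * U * (k1 * ae R nr j + k2 * (ae R nr j * (j%:R - nr) ^+ 2))
     + 2 * U * (ae R nr j * rho R nr (p.+2 + m - j))) <= _).
  apply: ler_sum => j _.
  have hd := d_bound n j u x x1 xn.
  have hd2 := d_le2 n j u.
  set d := nrm _ in hd hd2 *.
  have a0 := a_ge0 R nr nr0 j.
  have r0 := rho_ge0 R nr nr0 (p.+2 + m - j).
  set a := ae R nr j in a0 *; set r := rho R nr _ in r0 *.
  have h1 : a * e * d <= a * e * ((k1 + k2 * (j%:R - nr) ^+ 2) * U).
    apply: (ler_wpM2l (mulr_ge0 a0 e0)); apply: le_trans hd _.
    by rewrite /k2 (mulrAC 2 (x ^+ 4)^-1).
  have h2 : a * r * d <= a * r * (2 * U).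
    exact: (ler_wpM2l (mulr_ge0 a0 r0)).
  nra.
rewrite big_split /= -!mulr_sumr big_split /= -!mulr_sumr.
have M1 : \sum_(j < p.+2 + m) ae R nr j * (j%:R - nr) ^+ 2 =
    nr * TT R nr (p + m).+1 + nr ^+ 2 * (ae R nr (p + m).+1 - ae R nr (p + m)).
  by rewrite !addSn; exact: moment.
rewrite M1 -/(TT R nr (p.+2 + m)).
have C1 := conv_bound R nr nr0 p.+2 m.
have T1 := TT_le R nr nr0 (p.+2 + m).
have T2 := TT_le R nr nr0 (p + m).+1.
have eE : E * e = 1 by rewrite /E /e expRxMexpNx_1.
have a0 := a_ge0 R nr nr0 (p + m).
have a1 := a_ge0 R nr nr0 (p + m).+1.
have E0 : 0 <= E := expR_ge0 _.
have eU0 : 0 <= e * U by rewrite mulr_ge0.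
have h1 : e * U * k1 * TT R nr (p.+2 + m) <= U * k1.
  apply: le_trans (_ : e * U * k1 * E <= _).
    exact: (ler_wpM2l (mulr_ge0 eU0 k10)).
  have -> : e * U * k1 * E = (E * e) * (U * k1) by ring.
  by rewrite eE mul1r.
have h2 : e * U * (k2 * nr) * TT R nr (p + m).+1 <= U * (k2 * nr).
  apply: le_trans (_ : e * U * (k2 * nr) * E <= _).
    exact: (ler_wpM2l (mulr_ge0 eU0 (mulr_ge0 k20 nr0))).
  have -> : e * U * (k2 * nr) * E = (E * e) * (U * (k2 * nr)) by ring.
  by rewrite eE mul1r.
have h3 : 0 <= e * U * (k2 * nr ^+ 2) * ae R nr (p + m).
  exact: mulr_ge0 (mulr_ge0 eU0 (mulr_ge0 k20 (exprn_ge0 _ nr0))) a0.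
have h4 : 2 * U * (\sum_(i < p.+2 + m) ae R nr i * rho R nr (p.+2 + m - i)) <=
   2 * U * (E * (rho R nr m + rho R nr p.+2)).
  by apply: ler_wpM2l => //; rewrite mulr_ge0.
have -> : 2 * nr / x ^+ 4 = k2 * nr by rewrite /k2 mulrAC.
move: h1 h2 h3 h4.
set S1 := \sum_(i < _) _.
set t1 := TT R nr _; set t2 := TT R nr _.
move=> h1 h2 h3 h4.
nra.
Qed.

Lemma iterA_bound (nr : R) k v : 0 <= nr ->
  nrm (iter k (fun w => nr%:C *: (C w - w)) v) <= (2 * nr) ^+ k * nrm v.
Proof.
move=> nr0; elim: k => [|k IH]; first by rewrite expr0 mul1r.
rewrite iterS nrmZ ger0_norm // exprS.
set w := iter k _ v in IH *.
have h : nrm (C w - w) <= 2 * nrm w.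
  apply: le_trans (nrmD _ _) _; rewrite nrmN.
  have := iter_contr 1 w => /= h; lra.
have h1 : nr * nrm (C w - w) <= nr * (2 * nrm w) by exact: ler_wpM2l.
have h2 : nr * (2 * nrm w) <= nr * (2 * ((2 * nr) ^+ k * nrm v)).
  by apply: ler_wpM2l => //; lra.
lra.
Qed.

Lemma Sn_cvg n u : cvgn (Sn n u).
Proof.
have nr0 : (0 : R) <= n%:R by [].
rewrite /Sn; apply/cauchy_cvgP/cauchy_seriesP => e e0.
have [r r0 ->] := posC _ _ e0.
have := is_cvg_series_exp_coeff (2 * n%:R : R).
move/cauchy_cvgP/cauchy_seriesP => HR.
have U0 := nrm_ge0 u.
have rU : 0 < r / (nrm u + 1) by rewrite divr_gt0 // ltr_wpDl.
have := HR _ rU; apply: filterS => -[p q] /= h.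
rewrite nrm_lt.
apply: le_lt_trans (nrm_sum _ _) _.
apply: (le_lt_trans (y := \sum_(p <= k < q) exp_coeff (2 * n%:R) k * nrm u)).
  apply: ler_sum => k _.
  have -> : (k`!%:R : R[i])^-1 = ((k`!%:R : R)^-1)%:C by rewrite fmorphV rmorph_nat.
  rewrite nrmZ ger0_norm ?invr_ge0 // /exp_coeff /= mulrC -mulrA.
  have hb := iterA_bound n%:R k u nr0.
  have hf : 0 <= (k`!%:R : R)^-1 by rewrite invr_ge0.
  nra.
rewrite -mulr_suml.
apply: (le_lt_trans (y := `|\sum_(p <= k < q) exp_coeff (2 * n%:R) k| * nrm u)).
  by apply: ler_wpM2r => //; apply: ler_norm.
apply: (le_lt_trans (y := r / (nrm u + 1) * nrm u)).
  by apply: ler_wpM2r => //; apply: ltW.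
rewrite mulrAC ltr_pdivrMr ?ltr_wpDl //; nra.
Qed.
End Main.

Lemma small_mul (R : realType) (c t e : R) : 0 <= c -> 0 < e -> 0 <= t ->
  t < e / (3 * (c + 1)) -> c * t <= e / 3.
Proof.
move=> c0 e0 t0; rewrite ltr_pdivlMr; last by rewrite mulr_gt0 // ltr_wpDl.
move=> h; rewrite ler_pdivlMr //; nra.
Qed.

Lemma x_facts (R : realType) (n : nat) : (0 < n)%N ->
  let x : R := n%:R `^ 3^-1 in x ^+ 3 = n%:R /\ 1 <= x.
Proof.
move=> n0 x.
have x0 : 0 <= x := powR_ge0 _ _.
have xn : x ^+ 3 = n%:R.
  rewrite -powR_mulrn // /x -powRrM mulVf ?pnatr_eq0 // powRr1 //.
split => //.
case: (leP 1 x) => // hx.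
have n1 : (1 : R) <= n%:R by rewrite ler1n.
have e3 : x ^+ 3 = x * x * x by rewrite !exprS expr0 mulr1 mulrA.
have h1 : x * x <= x by nra.
have h2 : x * x * x <= x * x by nra.
lra.
Qed.

Local Close Scope classical_set_scope.
Theorem theorem3p3 (R : realType) (H : completeNormedModType R[i])
  (ip : inner_product H) (C : {linear H -> H}) (alpha K : R) :
  0 <= alpha -> alpha < pi / 2 ->
  contraction_op C ->
  quasi_sectorial ip alpha C ->
  0 < K ->
  (forall (n : nat) (u : H), `|iter n C (u - C u)| <= (K / n.+1%:R)%:C * `|u|) ->
  forall n : nat, (0 < n)%N ->
  forall u : H,
    `|iter n C u - opexp (fun v => (n%:R : R[i]) *: (C v - v)) u|
      <= ((2 * K + 2) / (n%:R `^ 3^-1))%:C * `|u|.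
Proof.
move=> _ _ Cc _ K0 hK n n0 u.
have -> : (fun v => (n%:R : R[i]) *: (C v - v)) = (fun v => (n%:R : R)%:C *: (C v - v)).
  by apply/funext => v; rewrite rmorph_nat.
have -> : opexp (fun v => (n%:R : R)%:C *: (C v - v)) u = limn (Sn R H C n u) by [].
have [xn x1] := x_facts R n n0.
set x := n%:R `^ 3^-1 in xn x1 *.
have x0 : 0 < x by apply: lt_le_trans x1.
set L := limn (Sn R H C n u).
rewrite (nrmE (iter n C u - L)) (nrmE u) -rmorphM lecR.
have -> : (2 * K + 2) / x = 2 * K / x + 2 * n%:R / x ^+ 4.
  rewrite -xn; field; rewrite gt_eqF //.
set nr : R := n%:R.
have nr0 : 0 <= nr by [].
set U := nrm u.
have U0 : 0 <= U := nrm_ge0 u.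
set e := expR (- nr); set E := expR nr.
have e0 : 0 <= e := expR_ge0 _.
have E0 : 0 <= E := expR_ge0 _.
set c2 := e * (2 / x ^+ 4) * nr ^+ 2 * U.
set c1 := 4 * E * U.
have c20 : 0 <= c2.
  have k2 : 0 <= 2 / x ^+ 4 by apply: divr_ge0 => //; apply: exprn_ge0; apply: ltW.
  exact: mulr_ge0 (mulr_ge0 (mulr_ge0 e0 k2) (exprn_ge0 _ nr0)) U0.
have c10 : 0 <= c1 by exact: mulr_ge0 (mulr_ge0 _ E0) U0.
apply/ler_addgt0Pr => eps eps0.
have eps3 : 0 < eps / 3 by rewrite divr_gt0.
have hS := Sn_cvg R H C Cc n u.
have epC : 0 < (eps / 3)%:C by rewrite ltcR.
have [M3 HM3] := cvg_ex hS _ epC.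
have ep1 : 0 < eps / (3 * (c1 + 1)) by rewrite divr_gt0 // mulr_gt0 // ltr_wpDl.
have ep2 : 0 < eps / (3 * (c2 + 1)) by rewrite divr_gt0 // mulr_gt0 // ltr_wpDl.
have [M1 HM1] := rho_cvg R nr _ ep1.
have [M2 HM2] := a_cvg R nr nr0 _ ep2.
set q := (M1 + M2 + M3)%N.
have hm := main_est R H C Cc K K0 hK n u x q q.+2 x1 xn.
have hr : rho R nr q.+2 < eps / (3 * (c1 + 1)).
  apply: HM1; apply: leq_trans (leqnSn _); apply: leq_trans (leqnSn _).
  by rewrite /q -addnA leq_addr.
have ha : ae R nr (q + q.+2).+1 < eps / (3 * (c2 + 1)).
  apply: HM2; apply: leq_trans (leqnSn _).
  apply: leq_trans (leq_addr q.+2 q).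
  by apply: leq_trans (leq_addr M3 (M1 + M2)); rewrite leq_addl.
have hl : nrm (L - Sn R H C n u (q.+2 + q.+2)) < eps / 3.
  rewrite -nrm_lt; apply: HM3.
  apply: leq_trans _ (leq_addl q.+2 q.+2).
  apply: leq_trans _ (leqnSn _); apply: leq_trans _ (leqnSn _).
  by rewrite /q leq_addl.
have s1 := small_mul _ _ _ _ c10 eps0 (rho_ge0 R nr nr0 q.+2) hr.
have s2 := small_mul _ _ _ _ c20 eps0 (a_ge0 R nr nr0 _) ha.
have tri : nrm (iter n C u - L) <=
    nrm (iter n C u - Sn R H C n u (q.+2 + q.+2)) + nrm (L - Sn R H C n u (q.+2 + q.+2)).
  rewrite (nrmB L); apply: le_trans (nrmD _ _).
  by rewrite addrA subrK.
move: hm; rewrite -/nr -/U -/e -/E.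
set a := ae R nr _ in ha s2 *; set r := rho R nr _ in hr s1 *.
set S1 := nrm (iter n C u - _) in tri *.
set S2 := nrm (L - _) in tri hl *.
have -> : (e * (2 / x ^+ 4) * nr ^+ 2 * a + 2 * E * (r + r)) * U = c2 * a + c1 * r.
  by rewrite /c1 /c2; ring.
move=> hm.
lra.
Qed.
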